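(* For any $F\in\mathscr{F}_{\mathrm{opt}}\cap\mathscr{F}_2$, there exists $i\in\mathcal{R}_F$ such that $|\mathcal{P}^2_{F,i}|=4$.
   Context: $\mathcal{S}$ is a finite source alphabet with $|\mathcal{S}|\ge 2$ and $\mathcal{C}=\{0,1\}$; $\mathcal{A}^k,\mathcal{A}^{\ast},\mathcal{A}^{+}$ are sequences of length $k$, finite, positive finite length; $\lambda$ empty sequence; $\preceq$ prefix, $\prec$ proper prefix; $\mathrm{suff}(x_1\cdots x_n)=x_2\cdots x_n$. A code-tuple $F$ with $m\ge1$ code tables consists of maps $f_i:\mathcal{S}\to\mathcal{C}^{\ast}$ and $\tau_i:\mathcal{S}\to\{0,\dots,m-1\}$, $i\in[F]=\{0,\dots,m-1\}$. $f_i^{\ast}(\lambda)=\lambda$, $\tau_i^{\ast}(\lambda)=i$, and for $\pmb{x}=x_1\cdots x_n\ne\lambda$, $f_i^{\ast}(\pmb{x})=f_i(x_1)f^{\ast}_{\tau_i(x_1)}(\mathrm{suff}(\pmb{x}))$, $\tau_i^{\ast}(\pmb{x})=\tau^{\ast}_{\tau_i(x_1)}(\mathrm{suff}(\pmb{x}))$. For integer $k\ge0$, $\pmb{b}\in\mathcal{C}^{\ast}$: $\mathcal{P}^k_{F,i}(\pmb{b})$ is the set of $\pmb{c}\in\mathcal{C}^k$ such that some $\pmb{x}=x_1\cdots x_n\in\mathcal{S}^{+}$ has $f_i^{\ast}(\pmb{x})\succeq\pmb{b}\pmb{c}$ and $f_i(x_1)\succeq\pmb{b}$; $\bar{\mathcal{P}}^k_{F,i}(\pmb{b})$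 the same with $f_i(x_1)\succ\pmb{b}$; $\mathcal{P}^k_{F,i}=\mathcal{P}^k_{F,i}(\lambda)$. $F\in\mathscr{F}_{2\text{-}\mathrm{dec}}$ if $\mathcal{P}^2_{F,\tau_i(s)}\cap\bar{\mathcal{P}}^2_{F,i}(f_i(s))=\emptyset$ for all $i,s$, and $\mathcal{P}^2_{F,\tau_i(s)}\cap\mathcal{P}^2_{F,\tau_i(s')}=\emptyset$ whenever $s\ne s'$, $f_i(s)=f_i(s')$. $F\in\mathscr{F}_{\mathrm{ext}}$ if $\mathcal{P}^1_{F,i}\ne\emptyset$ for all $i$. Fix $\mu:\mathcal{S}\to(0,1]$ with $\sum_s\mu(s)=1$; $Q(F)$ has entries $Q_{i,j}(F)=\sum_{s:\tau_i(s)=j}\mu(s)$; $F\in\mathscr{F}_{\mathrm{reg}}$ if $\pmb{\pi}Q(F)=\pmb{\pi}$, $\sum_i\pi_i=1$ has a unique solution $\pmb{\pi}(F)$; then $L(F)=\sum_i\pi_i(F)\sum_s|f_i(s)|\mu(s)$. $\mathscr{F}_0=\mathscr{F}_{\mathrm{reg}}\cap\mathscr{F}_{\mathrm{ext}}\cap\mathscr{F}_{2\text{-}\mathrm{dec}}$; $\mathscr{F}_{\mathrm{opt}}$ is the set of $F\in\mathscr{F}_0$ with $L(F)\le L(F')$ for all $F'\in\mathscr{F}_0$. $\mathscr{F}_2=\{F\in\mathscr{F}_{\mathrm{reg}}\cap\mathscr{F}_{2\text{-}\mathrm{dec}}:|\mathcal{P}^2_{F,i}|\ge3\ \forall i\in[F]\}$.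 $\mathcal{R}_F=\{i\in[F]:\text{for every }j\in[F]\text{ there is }\pmb{x}\in\mathcal{S}^{\ast}\text{ with }\tau^{\ast}_j(\pmb{x})=i\}$. *)

(* Defs.v *)
From HB Require Import structures.
From mathcomp Require Import all_boot all_order all_algebra.
From mathcomp Require Import boolp reals.

Import Order.TTheory GRing.Theory Num.Theory.
Local Open Scope ring_scope.

(* A code-tuple over source alphabet S with code alphabet C = bool.
   It has (ct_m F).+1 >= 1 code tables, indexed by 'I_(ct_m F).+1. *)
Record codetuple (S : finType) := CodeTuple {
  ct_m : nat;
  ct_f : 'I_ct_m.+1 -> S -> seq bool;
  ct_tau : 'I_ct_m.+1 -> S -> 'I_ct_m.+1 }.

Arguments ct_m {S} c.
Arguments ct_f {S} c _ _.
Arguments ct_tau {S} c _ _.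

Section CodeTuples.
Variable S : finType.
Implicit Type F : codetuple S.

Fixpoint fstar F (i : 'I_(ct_m F).+1) (x : seq S) : seq bool :=
  match x with
  | [::] => [::]
  | s :: x' => ct_f F i s ++ fstar F (ct_tau F i s) x'
  end.

Fixpoint taustar F (i : 'I_(ct_m F).+1) (x : seq S) : 'I_(ct_m F).+1 :=
  match x with
  | [::] => i
  | s :: x' => taustar F (ct_tau F i s) x'
  end.

Definition Pset F (k : nat) (i : 'I_(ct_m F).+1) (b : seq bool)
  : {set k.-tuple bool} :=
  [set c | `[< exists (s : S) (x : seq S),
      prefix (b ++ val c) (fstar F i (s :: x)) /\ prefix b (ct_f F i s) >]].

Definition Pbarset F (k : nat) (i : 'I_(ct_m F).+1) (b : seq bool)
  : {set k.-tuple bool} :=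
  [set c | `[< exists (s : S) (x : seq S),
      prefix (b ++ val c) (fstar F i (s :: x)) /\
      (prefix b (ct_f F i s) && (b != ct_f F i s)) >]].

Definition P0 F (k : nat) (i : 'I_(ct_m F).+1) := Pset F k i [::].

Definition is_2dec F : Prop :=
  (forall i s, P0 F 2 (ct_tau F i s) :&: Pbarset F 2 i (ct_f F i s) = set0) /\
  (forall i s s', s != s' -> ct_f F i s = ct_f F i s' ->
     P0 F 2 (ct_tau F i s) :&: P0 F 2 (ct_tau F i s') = set0).

Definition is_ext F : Prop := forall i, P0 F 1 i != set0.

Variable R : realType.
Variable mu : S -> R.

Definition Qmat F (i j : 'I_(ct_m F).+1) : R :=
  \sum_(s | ct_tau F i s == j) mu s.

Definition stationary F (pi : 'I_(ct_m F).+1 -> R) : Prop :=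
  (forall j, \sum_i pi i * Qmat F i j = pi j) /\ \sum_i pi i = 1.

Definition is_reg F : Prop := exists! pi, stationary F pi.

(* L(F), computed from the (unique, for F regular) stationary solution pi *)
Definition Lw F (pi : 'I_(ct_m F).+1 -> R) : R :=
  \sum_i pi i * \sum_s (size (ct_f F i s))%:R * mu s.

Definition in_F0 F : Prop := is_reg F /\ is_ext F /\ is_2dec F.

(* F in F_opt: F in F_0 and L(F) <= L(F') for all F' in F_0, where
   L(F) = Lw F pi(F) with pi(F) the unique stationary solution. *)
Definition in_Fopt F : Prop :=
  in_F0 F /\
  forall F' : codetuple S, in_F0 F' ->
    forall pi pi', stationary F pi -> stationary F' pi' -> Lw F pi <= Lw F' pi'.

Definition in_F2 F : Prop :=
  is_reg F /\ is_2dec F /\ forall i, (3 <= #|P0 F 2 i|)%N.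

End CodeTuples.

Definition RF (S : finType) (F : codetuple S) (i : 'I_(ct_m F).+1) : Prop :=
  forall j : 'I_(ct_m F).+1, exists x : seq S, taustar S F j x = i.

(* Main.v *)
Require Import Defs.
From HB Require Import structures.
From mathcomp Require Import all_boot all_order all_algebra.
From mathcomp Require Import boolp reals.
From mathcomp Require Import lra zify.
Import Order.TTheory GRing.Theory Num.Theory.
Local Open Scope ring_scope.
Set Implicit Arguments. Unset Strict Implicit. Unset Printing Implicit Defensive.

Section Markov.
Variables (R : realType) (S : finType) (mu : S -> R).
Hypothesis hmu : forall s, 0 < mu s.
Hypothesis hsum : \sum_s mu s = 1.

Lemma Qmat_ge0 (F : codetuple S) i j : 0 <= Qmat S R mu F i j.
Proof. by apply: sumr_ge0 => s _; apply: ltW. Qed.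

Lemma Qmat_row (F : codetuple S) i : \sum_j Qmat S R mu F i j = 1.
Proof.
rewrite -hsum (partition_big (ct_tau F i) predT) //=.
Qed.

Lemma sum_delta n (d : 'I_n) (c : 'I_n -> R) : \sum_j (j == d)%:R * c j = c d.
Proof.
rewrite (bigD1 d) //= eqxx mul1r big1 ?addr0 // => j /negbTE ->; by rewrite mul0r.
Qed.

Lemma existsA (F : codetuple S) (D : {set 'I_(ct_m F).+1}) d0 :
  d0 \in D -> (forall i s, i \in D -> ct_tau F i s \in D) ->
  exists pi, stationary S R mu F pi /\ (forall i, 0 <= pi i) /\
             (forall i, i \notin D -> pi i = 0).
Proof.
move=> d0D closD.
set n := (ct_m F).+1.
pose A : 'M[R]_n := \matrix_(i, j) (if i \in D then Qmat S R mu F i j else (j == d0)%:R).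
have Arow' : forall i, \sum_j (if i \in D then Qmat S R mu F i j else (j == d0)%:R) = 1.
  move=> i; case: (i \in D); first exact: Qmat_row.
  under eq_bigr do rewrite -[_%:R]mulr1.
  by rewrite sum_delta.
have Arow : forall i, \sum_j A i j = 1.
  by move=> i; rewrite -(Arow' i); apply: eq_bigr => j _; rewrite mxE.
have A0 : forall i j, 0 <= A i j.
  move=> i j; rewrite mxE; case: (i \in D); first exact: Qmat_ge0.
  by rewrite ler0n.
have : \det (A - 1%:M) == 0.
  rewrite -det_tr; apply/det0P; exists (const_mx 1 : 'rV_n).
    apply/eqP => /matrixP /(_ 0 0); rewrite !mxE => /eqP; by rewrite oner_eq0.
  apply/matrixP => i j; rewrite !mxE.
  under eq_bigr do rewrite !mxE mul1r.
  rewrite sumrB Arow'.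
  under eq_bigr do rewrite eq_sym -[_%:R]mulr1.
  by rewrite sum_delta subrr.
case/det0P => v vn0 hv.
have hvA : forall j, \sum_i v 0 i * A i j = v 0 j.
  move: hv; rewrite mulmxBr mulmx1 => /eqP; rewrite subr_eq0 => /eqP hv j.
  by have := congr1 (fun M : 'rV_n => M 0 j) hv; rewrite !mxE.
pose w i := `|v 0 i|.
have w0 : forall i, 0 <= w i by move=> i; exact: normr_ge0.
have wA : forall j, w j <= \sum_i w i * A i j.
  move=> j; rewrite /w -hvA; apply: le_trans (ler_norm_sum _ _ _) _.
  by apply: ler_sum => i _; rewrite normrM (ger0_norm (A0 _ _)).
have sumeq : \sum_j (\sum_i w i * A i j - w j) = 0.
  rewrite sumrB exchange_big /=.
  under eq_bigr do rewrite -mulr_sumr Arow mulr1.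
  by rewrite subrr.
have wAe : forall j, \sum_i w i * A i j = w j.
  move=> j; apply/eqP; rewrite -subr_eq0; apply/eqP.
  by apply: (psumr_eq0P _ sumeq) => // k _; rewrite subr_ge0.
have wD : forall i, i \notin D -> w i = 0.
  move=> i iD; rewrite -wAe; apply: big1 => k _; rewrite mxE.
  case: ifP => kD.
    rewrite /Qmat big_pred0 ?mulr0 // => s; apply/negbTE; apply: contraNneq iD => <-.
    exact: closD.
  by rewrite (negbTE (contraNneq _ iD)) ?mulr0 // => ->.
have [i0 vi0] : exists i, v 0 i != 0.
  apply/existsP; apply: contraNT vn0 => /existsPn H; apply/eqP/matrixP => i j.
  by rewrite ord1 mxE; apply/eqP; have := H j; rewrite negbK.
set W := \sum_i w i.
have Wpos : 0 < W.
  rewrite /W (bigD1 i0) //=.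
  have h1 : 0 < w i0 by rewrite /w normr_gt0.
  have h2 : 0 <= \sum_(i | i != i0) w i by apply: sumr_ge0.
  lra.
exists (fun i => w i / W); split; [split|split].
- move=> j; rewrite -wAe mulr_suml; apply: eq_bigr => i _.
  rewrite mxE mulrAC; case: ifP => // /negbT /wD ->; by rewrite !mul0r.
- by rewrite -mulr_suml divff // gt_eqF.
- by move=> i; apply: divr_ge0 => //; apply: ltW.
- by move=> i /wD ->; rewrite mul0r.
Qed.


Lemma reg_uniq (F : codetuple S) p1 p2 : is_reg S R mu F ->
  stationary S R mu F p1 -> stationary S R mu F p2 -> p1 = p2.
Proof. by case=> x [_ H] /H <- /H <-. Qed.

Lemma taustar_cat (F : codetuple S) i x y :
  taustar S F i (x ++ y) = taustar S F (taustar S F i x) y.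
Proof. by elim: x i => //= s x IH i. Qed.

Lemma reg_nonneg (F : codetuple S) pi : is_reg S R mu F ->
  stationary S R mu F pi -> forall i, 0 <= pi i.
Proof.
move=> reg st.
have [p [stp [p0 _]]] := @existsA F [set: _] ord0 (in_setT _) (fun _ _ _ => in_setT _).
by rewrite (reg_uniq reg st stp).
Qed.

Lemma reg_RF (F : codetuple S) pi : is_reg S R mu F ->
  stationary S R mu F pi -> forall j, pi j != 0 -> RF S F j.
Proof.
move=> reg st j pj k.
pose D := [set v | `[< exists x, taustar S F k x = v >]].
have kD : k \in D by rewrite inE; apply/asboolP; exists [::].
have closD : forall i s, i \in D -> ct_tau F i s \in D.
  move=> i s; rewrite !inE => /asboolP [x hx]; apply/asboolP; exists (x ++ [:: s]).
  by rewrite taustar_cat hx.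
have [p [stp [_ pD]]] := existsA kD closD.
rewrite (reg_uniq reg st stp) in pj.
have : j \in D by apply: contraNT pj => /pD ->.
by rewrite inE => /asboolP.
Qed.

End Markov.

Definition mk2 (z : seq bool) : 2.-tuple bool := [tuple nth false z 0; nth false z 1].

Lemma mk2E z : (2 <= size z)%N -> val (mk2 z) = take 2 z.
Proof. case: z => [|x [|y z]] //= _; by rewrite take0. Qed.

Lemma tuple2P (c : 2.-tuple bool) : exists x y, val c = [:: x; y].
Proof. by case: c => [[|x [|y [|]]]] //= _; exists x, y. Qed.

Lemma card2t : #|{: 2.-tuple bool}| = 4%N.
Proof. by rewrite card_tuple card_bool. Qed.

Lemma inP0 (S : finType) (F : codetuple S) k i (c : k.-tuple bool) :
  c \in P0 S F k i <-> exists s x, take k (fstar S F i (s :: x)) = val c.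
Proof.
rewrite inE; split => [/asboolP [s [x [h _]]]|[s [x h]]].
  by exists s, x; move: h; rewrite cat0s prefixE size_tuple => /eqP.
by apply/asboolP; exists s, x; rewrite cat0s prefixE size_tuple h prefix0s.
Qed.

Lemma inPbar (S : finType) (F : codetuple S) k i b (c : k.-tuple bool) :
  c \in Pbarset S F k i b <-> exists s x, prefix (b ++ val c) (fstar S F i (s :: x))
     /\ prefix b (ct_f F i s) /\ b != ct_f F i s.
Proof.
rewrite inE; split => [/asboolP [s [x [h /andP [h1 h2]]]]|[s [x [h [h1 h2]]]]].
  by exists s, x.
by apply/asboolP; exists s, x; rewrite h1 h2.
Qed.

Lemma prefix_eq_size (T : eqType) (u v : seq T) : prefix u v -> size u = size v -> u = v.
Proof.
move=> /prefixP [w ->]; rewrite size_cat => e.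
have : size w = 0%N by lia.
by move/eqP; rewrite size_eq0 => /eqP ->; rewrite cats0.
Qed.

Lemma take_size2 (w : seq bool) k (c : k.-tuple bool) : take k w = val c -> (k <= size w)%N.
Proof.
move=> h; have := congr1 size h; rewrite size_take size_tuple.
by case: ifP => [/ltnW|_ ->].
Qed.

Lemma fstar_cons (S : finType) (F : codetuple S) i s x :
  fstar S F i (s :: x) = ct_f F i s ++ fstar S F (ct_tau F i s) x.
Proof. by []. Qed.

Section Comb.
Variables (S : finType) (F : codetuple S).
Hypothesis hS : (2 <= #|S|)%N.
Hypothesis h2dec : is_2dec S F.
Hypothesis hF2 : forall i, (3 <= #|P0 S F 2 i|)%N.
Local Notation f := (ct_f F).
Local Notation tau := (ct_tau F).
Local Notation fs := (fstar S F).

Lemma noeq i s s' : s != s' -> f i s = f i s' -> False.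
Proof.
move=> ss' e; have := h2dec.2 i s s' ss' e => h.
have := cardsUI (P0 S F 2 (tau i s)) (P0 S F 2 (tau i s')).
rewrite h cards0 addn0 => e2.
have := max_card (mem (P0 S F 2 (tau i s) :|: P0 S F 2 (tau i s'))).
rewrite card2t e2 => h4.
have := hF2 (tau i s); have := hF2 (tau i s'); lia.
Qed.

Lemma other_sym (s : S) : exists s', s' != s.
Proof.
have /card_gt1P [x [y [_ _ xy]]] : (1 < #|[set: S]|)%N by rewrite cardsT.
case: (eqVneq x s) => [xs|]; last by exists x.
by exists y; rewrite -xs eq_sym.
Qed.

Lemma nonempty_cw j : exists s, f j s != [::].
Proof.
have /card_gt0P [s0 _] : (0 < #|S|)%N by lia.
have [s1 s10] := other_sym s0.
case: (eqVneq (f j s0) [::]) => [e0|]; last by exists s0.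
case: (eqVneq (f j s1) [::]) => [e1|]; last by exists s1.
by exfalso; apply: (@noeq j _ _ s10); rewrite e0 e1.
Qed.

Definition leaf j s := (f j s != [::]) &&
  [forall s', ~~ (prefix (f j s) (f j s') && (f j s != f j s'))].

Lemma leaf_exists j : exists s, leaf j s.
Proof.
have [s1 hs1] := nonempty_cw j.
case: (@arg_maxnP _ s1 (fun s => f j s != [::]) (fun s => size (f j s)) hs1) => s hs hmax.
exists s; rewrite /leaf hs /=; apply/forallP => s'; apply/negP => /andP [pr ne].
have le := size_prefix pr.
have : (size (f j s') <= size (f j s))%N.
  apply: hmax; rewrite -size_eq0 -lt0n; apply: leq_trans le; by rewrite lt0n size_eq0.
move=> le2; apply/negP: ne; rewrite negbK; apply/eqP; apply: prefix_eq_size pr _.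
by apply/eqP; rewrite eqn_leq le le2.
Qed.


Section I0.
Variables (i0 : 'I_(ct_m F).+1) (a b : bool).
Hypothesis h3 : #|P0 S F 2 i0| = 3%N.
Hypothesis hab : forall c : 2.-tuple bool, val c = [:: a; b] -> c \notin P0 S F 2 i0.

Lemma F1 s : f i0 s != [::].
Proof.
apply/negP => /eqP hs; set t := tau i0 s.
have sub : P0 S F 2 t \subset P0 S F 2 i0.
  apply/subsetP => c /inP0 [s' [x h]]; apply/inP0; exists s, (s' :: x).
  by rewrite /= hs cat0s.
have [s' s's] := other_sym s.
have ne : f i0 s' != [::].
  by apply/negP => /eqP e; apply: (@noeq i0 _ _ s's); rewrite e hs.
have /card_gt0P [c'' /inP0 [s'' [x'' hc'']]] : (0 < #|P0 S F 2 (tau i0 s')|)%N.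
  by have := hF2 (tau i0 s'); lia.
set z := fs i0 (s' :: s'' :: x'').
have sz : (2 <= size z)%N.
  rewrite /z fstar_cons size_cat; have := take_size2 hc''.
  move: ne; rewrite -size_eq0 -lt0n; lia.
have inb : mk2 z \in Pbarset S F 2 i0 (f i0 s).
  apply/inPbar; exists s', (s'' :: x''); rewrite hs cat0s mk2E // prefix_take.
  by rewrite prefix0s eq_sym.
have nt : mk2 z \notin P0 S F 2 t.
  apply/negP => Ht; have := h2dec.1 i0 s; rewrite -/t => /setP /(_ (mk2 z)).
  by rewrite inE Ht inb inE.
have ini : mk2 z \in P0 S F 2 i0 by apply/inP0; exists s', (s'' :: x''); rewrite mk2E.
have : (mk2 z |: P0 S F 2 t) \subset P0 S F 2 i0.
  by apply/subsetP => c; rewrite in_setU1 => /orP [/eqP ->|/(subsetP sub)].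
move/subset_leq_card; rewrite cardsU1 nt h3 /=; have := hF2 t => A B; by have := leq_trans (leq_add (leqnn 1) A) B.
Qed.

Lemma F2 s : f i0 s != [:: a].
Proof.
apply/negP => /eqP hs; set t := tau i0 s.
have sub : P0 S F 2 t \subset [set mk2 [:: ~~ b; false]; mk2 [:: ~~ b; true]].
  apply/subsetP => c /inP0 [s' [x h]].
  have [y1 [y2 ey]] := tuple2P c.
  have ey1 : y1 = ~~ b.
    case: (boolP (y1 == b)) => [/eqP e|]; last by case: y1 {ey}; case: b.
    exfalso; set z := fs i0 (s :: s' :: x).
    have ez : z = a :: fs t (s' :: x) by rewrite /z fstar_cons hs.
    have z2 : (2 <= size z)%N by rewrite ez /= ltnS; apply: ltnW; exact: take_size2 h.
    apply: (negP (hab (c := mk2 z) _)).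
      rewrite mk2E // ez /= -(@take_takel _ 1 2 (fs t (s' :: x)) isT) h ey e.
      by [].
    by apply/inP0; exists s, (s' :: x); rewrite mk2E.
  rewrite !inE; apply/orP; case: y2 ey => ey; [right|left]; apply/eqP/val_inj; by rewrite ey ey1.
have := subset_leq_card sub; rewrite cards2; have := hF2 t.
case: (_ != _); lia.
Qed.

Lemma F3 s x w : f i0 s = a :: x :: w -> x = ~~ b.
Proof.
move=> hs; case: (boolP (x == b)) => [/eqP e|]; last by case: x {hs}; case: b.
exfalso; have z2 : (2 <= size (fs i0 [:: s]))%N by rewrite fstar_cons hs.
apply: (negP (hab (c := mk2 (fs i0 [:: s])) _)).
  by rewrite mk2E // fstar_cons hs e /= take0.
by apply/inP0; exists s, [::]; rewrite mk2E.
Qed.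

Lemma F4 : exists s x w, f i0 s = a :: x :: w.
Proof.
have c1in : mk2 [:: a; ~~ b] \in P0 S F 2 i0.
  apply/negPn/negP => c1n.
  have sub : P0 S F 2 i0 \subset ~: [set mk2 [:: a; b]; mk2 [:: a; ~~ b]].
    apply/subsetP => c cin; rewrite !inE negb_or; apply/andP; split.
      by apply: contraTneq cin => ->; apply: hab.
    by apply: contraTneq cin => ->.
  have := subset_leq_card sub.
  have := cardsC [set mk2 [:: a; b]; mk2 [:: a; ~~ b]].
  rewrite cards2 card2t h3.
  have -> : (mk2 [:: a; b] != mk2 [:: a; ~~ b]) by apply/eqP => /(congr1 val) [] /eqP; case: b.
  by rewrite /= => A B; move: A; rewrite add2n => -[] A; rewrite A in B.
case/inP0: c1in => s [x h].
have := F1 s; have := F2 s.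
case hs: (f i0 s) => [|y [|x' w]] // h2 _.
  by exfalso; move: h; rewrite fstar_cons hs /= => -[ya _]; rewrite ya eqxx in h2.
by exists s, x', w; move: h; rewrite fstar_cons hs /= => -[-> _].
Qed.

End I0.

End Comb.


Definition gsh (a : bool) (w : seq bool) :=
  match w with x :: _ :: w' => if x == a then x :: w' else w | _ => w end.

Definition good (a b : bool) (w : seq bool) :=
  [/\ w != [::], w != [:: a] & forall x w', w = a :: x :: w' -> x = ~~ b].

Lemma gsh_prefix a b be ga de : good a b be -> good a b ga ->
  gsh a ga = gsh a be ++ de -> ga = be ++ de.
Proof.
case=> b0 b1 b2 [g0 g1 g2].
case: be b0 b1 b2 => [//|y [|x be']] _ b1 b2.
-
  have ya : y != a by apply: contra b1 => /eqP ->.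
  case: ga g0 g1 g2 => [//|z [|z' ga']] _ g1 g2 /=.
    by move=> ->.
  case: ifP => [/eqP za|_]; last by move=> ->.
  by move=> [zy]; move: ya; rewrite -zy za eqxx.
- have -> : gsh a [:: y, x & be'] = if y == a then y :: be' else [:: y, x & be'] by [].
  case: ifP => [/eqP ya|ya].
  + subst y; have xb := b2 _ _ erefl.
    case: ga g0 g1 g2 => [//|z [|z' ga']] _ g1 g2 /=.
      by move=> [za]; move: g1; rewrite za eqxx.
    case: ifP => [/eqP za|za].
      subst z; have := g2 _ _ erefl => zb [] ->; by rewrite zb xb.
    by move=> [zt]; move: za; rewrite zt eqxx.
  + case: ga g0 g1 g2 => [//|z [|z' ga']] _ g1 g2 /=.
      by move=> ->.
    case: ifP => [/eqP za|_]; last by move=> ->.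
    by move=> [zy]; move: ya; rewrite -zy za eqxx.
Qed.

Lemma take1_cat (w r : seq bool) : w != [::] -> take 1 (w ++ r) = take 1 w.
Proof. by case: w => [|x w] //= _; rewrite !take0. Qed.

Lemma take1_nil (w : seq bool) : take 1 w = [::] -> w = [::].
Proof. by case: w. Qed.

Lemma take1_gsh a w : take 1 (gsh a w) = take 1 w.
Proof. by case: w => [|x [|y w]] //=; case: ifP; rewrite //= !take0. Qed.

Lemma prefix_catl2 (T : eqType) (p c z : seq T) : prefix (p ++ c) (p ++ z) = prefix c z.
Proof. by elim: p => //= x p ->; rewrite eqxx. Qed.

Section Constr.
Variables (S : finType) (F : codetuple S) (i0 : 'I_(ct_m F).+1) (a b : bool).
Hypothesis hS : (2 <= #|S|)%N.
Hypothesis h2dec : is_2dec S F.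
Hypothesis hF2 : forall i, (3 <= #|P0 S F 2 i|)%N.
Hypothesis hext : is_ext S F.
Hypothesis hgood : forall s, good a b (ct_f F i0 s).
Local Notation f := (ct_f F).
Local Notation tau := (ct_tau F).
Local Notation n := (ct_m F).+1.

Definition emb (k : 'I_n) : 'I_n.+1 := widen_ord (leqnSn n) k.
Definition proj (u : 'I_n.+1) : 'I_n := insubd i0 (val u).
Definition fN (u : 'I_n.+1) s := if u == ord_max then gsh a (f i0 s) else f (proj u) s.
Definition tN (u : 'I_n.+1) s : 'I_n.+1 :=
  if (tau (proj u) s == i0) && leaf (proj u) s then ord_max else emb (tau (proj u) s).
Definition FN : codetuple S := @CodeTuple S n fN tN.

Lemma proj_emb k : proj (emb k) = k.
Proof. by apply: val_inj; rewrite /proj val_insubd /= ltn_ord. Qed.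

Lemma proj_max : proj ord_max = i0.
Proof. by apply: val_inj; rewrite /proj val_insubd /= ltnn. Qed.

Lemma emb_max k : emb k != ord_max.
Proof. by rewrite -val_eqE /= neq_ltn ltn_ord. Qed.

Lemma proj_tN u s : proj (tN u s) = tau (proj u) s.
Proof. rewrite /tN; case: ifP => [/andP [/eqP -> _]|_]; by rewrite ?proj_max ?proj_emb. Qed.

Lemma fN_nomax u s : u != ord_max -> fN u s = f (proj u) s.
Proof. by rewrite /fN => /negbTE ->. Qed.

Lemma take1_fN u s : take 1 (fN u s) = take 1 (f (proj u) s).
Proof. rewrite /fN; case: eqP => [->|//]; by rewrite take1_gsh proj_max. Qed.

Lemma take1_sim u x : exists y,
  take 1 (fstar S FN u x) = take 1 (fstar S F (proj u) y).
Proof.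
elim: x u => [|s x IH] u; first by exists [::].
rewrite fstar_cons /=.
case: (eqVneq (f (proj u) s) [::]) => [e|ne].
  have e' : fN u s = [::] by apply: take1_nil; rewrite take1_fN e.
  have [y hy] := IH (tN u s); exists (s :: y).
  by rewrite e' fstar_cons e hy proj_tN.
exists [:: s]; rewrite fstar_cons !take1_cat // ?take1_fN //.
by apply: contra ne => /eqP e; apply/eqP/take1_nil; rewrite -take1_fN e.
Qed.

Lemma take1_sim' u y : exists x,
  take 1 (fstar S FN u x) = take 1 (fstar S F (proj u) y).
Proof.
elim: y u => [|s y IH] u; first by exists [::].
rewrite fstar_cons.
case: (eqVneq (f (proj u) s) [::]) => [e|ne].
  have e' : fN u s = [::] by apply: take1_nil; rewrite take1_fN e.
  have [x hx] := IH (tN u s); exists (s :: x).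
  by rewrite fstar_cons /= e' e hx proj_tN.
exists [:: s]; rewrite fstar_cons /= !take1_cat // ?take1_fN //.
by apply: contra ne => /eqP e; apply/eqP/take1_nil; rewrite -take1_fN e.
Qed.

Lemma tN_max u s : tN u s = ord_max -> leaf (proj u) s.
Proof.
rewrite /tN; case: ifP => [/andP [] //|_ /eqP]; by rewrite (negbTE (emb_max _)).
Qed.

Lemma take2_sim u x : u != ord_max -> exists y,
  take 2 (fstar S FN u x) = take 2 (fstar S F (proj u) y).
Proof.
elim: x u => [|s x IH] u um; first by exists [::].
rewrite fstar_cons /= fN_nomax //.
case e: (f (proj u) s) => [|d [|d' w]].
- have tm : tN u s != ord_max.
    by apply/negP => /eqP /tN_max; rewrite /leaf e eqxx.
  have [y hy] := IH _ tm; exists (s :: y).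
  by rewrite fstar_cons e /= hy proj_tN.
- have [y hy] := take1_sim (tN u s) x; exists (s :: y).
  by rewrite fstar_cons e /= hy proj_tN.
- by exists [:: s]; rewrite fstar_cons e /= !take0.
Qed.

Lemma p0_sub v : v != ord_max -> P0 S FN 2 v \subset P0 S F 2 (proj v).
Proof.
move=> vm; apply/subsetP => c /inP0 [s [x h]].
have [y hy] := take2_sim (s :: x) vm.
apply/inP0; case: y hy => [|s' y] hy.
  by exfalso; move: (size_tuple c); rewrite -h hy.
by exists s', y; rewrite -hy.
Qed.

Lemma p1_sup u : P0 S F 1 (proj u) \subset P0 S FN 1 u.
Proof.
apply/subsetP => c /inP0 [s [y h]].
have [x hx] := take1_sim' u (s :: y).
apply/inP0; case: x hx => [|s' x] hx.
  by exfalso; move: (size_tuple c); rewrite -h -hx.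
by exists s', x; rewrite hx.
Qed.

Lemma fN_split u s s1 :
  prefix (fN u s) (fN u s1) -> fN u s != fN u s1 ->
  exists de, [/\ de != [::], fN u s1 = fN u s ++ de & f (proj u) s1 = f (proj u) s ++ de].
Proof.
move=> /prefixP [de hde] ne.
have den : de != [::] by apply: contra ne => /eqP e; rewrite hde e cats0.
exists de; split => //.
rewrite /fN in hde; case: eqP hde => [um|um] hde; last by [].
rewrite um proj_max; exact: gsh_prefix (hgood s) (hgood s1) hde.
Qed.

Lemma pbar_sub u s :
  Pbarset S FN 2 u (fN u s) \subset Pbarset S F 2 (proj u) (f (proj u) s).
Proof.
apply/subsetP => c /inPbar [s1 [x [hp [hpre hne]]]].
have [de [den e1 e2]] := fN_split hpre hne.
move: hp; rewrite fstar_cons /= e1 -catA prefix_catl2 prefixE size_tuple => /eqP hp.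
have [y hy] := take1_sim (tN u s1) x.
apply/inPbar; exists s1, y; split; [|split].
  rewrite fstar_cons e2 -catA prefix_catl2 prefixE size_tuple; apply/eqP; apply: (etrans _ hp); rewrite -proj_tN.
  case: de den {e1 e2 hp} => [//|d de] _ /=.
  by case: de => [|d' de] /=; rewrite ?hy // !take0.
- by rewrite e2 prefix_prefix.
- rewrite e2; apply/negP => /eqP e; move/negP: den; apply; rewrite -size_eq0; have := congr1 size e; rewrite size_cat; lia.
Qed.

Lemma FN_2dec : is_2dec S FN.
Proof.
split.
- move=> u s; apply/setP => c; rewrite in_setI in_set0; apply/negbTE/negP => /andP [c1 c2].
  have := subsetP (pbar_sub u s) _ c2.
  case: (eqVneq (tN u s) ord_max) => [tm|tm].
    move/inPbar => [s1 [x [_ [hp hne]]]].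
    have /andP [_ /forallP /(_ s1)] := tN_max tm.
    by rewrite hp hne.
  move=> c3; have c4 := subsetP (p0_sub tm) _ c1; rewrite proj_tN in c4.
  have := h2dec.1 (proj u) s => /setP /(_ c); by rewrite inE c4 c3 inE.
- move=> u s s' ss' e; exfalso.
  have e' : f (proj u) s = f (proj u) s'.
    move: e => /=; case: (eqVneq u ord_max) => [->|um]; last by rewrite !fN_nomax.
    rewrite /fN eqxx proj_max => e.
    by have := gsh_prefix (hgood s) (hgood s') (etrans (esym e) (esym (cats0 _))); rewrite cats0 => ->.
  exact: (@noeq S F hS h2dec hF2 (proj u) s s' ss' e').
Qed.

Lemma FN_ext : is_ext S FN.
Proof.
move=> u; have /set0Pn [c hc] := hext (proj u).
by apply/set0Pn; exists c; apply: (subsetP (p1_sup u)).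
Qed.

End Constr.

Section Stat.
Variables (R : realType) (S : finType) (mu : S -> R) (F : codetuple S)
  (i0 : 'I_(ct_m F).+1) (a : bool).
Hypothesis hmu : forall s, 0 < mu s.
Hypothesis hsum : \sum_s mu s = 1.
Local Notation n := (ct_m F).+1.
Local Notation FN := (FN i0 a).
Local Notation proj := (proj i0).

Definition pP (p : 'I_n.+1 -> R) (k : 'I_n) := p (emb k) + (k == i0)%:R * p ord_max.

Lemma decomp (p : 'I_n.+1 -> R) (h : 'I_n -> R) :
  \sum_v p v * h (proj v) = \sum_k pP p k * h k.
Proof.
rewrite big_ord_recr /= proj_max.
under [RHS]eq_bigr do rewrite /pP mulrDl.
rewrite big_split /=; congr (_ + _).
  by apply: eq_bigr => k _; rewrite proj_emb.
under [RHS]eq_bigr do rewrite mulrAC.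
by rewrite -mulr_suml sum_delta mulrC.
Qed.

Lemma not_max_emb (v : 'I_n.+1) : v != ord_max -> v = emb (proj v).
Proof.
move=> vm; apply: val_inj; rewrite /= /proj val_insubd.
have : (val v < n.+1)%N := ltn_ord v.
by move: vm; rewrite -val_eqE /= => vm; rewrite ltnS leq_eqVlt (negbTE vm) /= => ->.
Qed.

Lemma tN_emb_proj (u : 'I_n.+1) s : tN i0 (emb (proj u)) s = tN i0 u s.
Proof. by rewrite /tN proj_emb. Qed.

Lemma sum_ind (m : nat) (x : 'I_m) (c : 'I_m -> R) : \sum_w (x == w)%:R * c w = c x.
Proof. by under eq_bigr do rewrite eq_sym; rewrite sum_delta. Qed.

Lemma sum_cond (P : pred S) (c : S -> R) : \sum_(s | P s) c s = \sum_s (P s)%:R * c s.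
Proof. by rewrite big_mkcond; apply: eq_bigr => s _; case: (P s); rewrite ?mul1r ?mul0r. Qed.

Lemma projQ (v : 'I_n.+1) j :
  Qmat S R mu F (proj v) j = \sum_w Qmat S R mu FN v w * (proj w == j)%:R.
Proof.
rewrite /Qmat sum_cond.
under [RHS]eq_bigr do rewrite sum_cond mulr_suml.
rewrite exchange_big /=; apply: eq_bigr => s _.
under eq_bigr do rewrite mulrAC.
under eq_bigr do rewrite -mulrA.
by rewrite (sum_ind _ (fun w => (proj w == j)%:R * mu s)) proj_tN.
Qed.


Lemma pP_stat p : stationary S R mu FN p -> stationary S R mu F (pP p).
Proof.
case=> st1 st2; split.
- move=> j; rewrite -(decomp p (fun k => Qmat S R mu F k j)).
  under eq_bigr do rewrite projQ mulr_sumr.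
  transitivity (\sum_w (\sum_v p v * Qmat S R mu FN v w) * (proj w == j)%:R).
    rewrite exchange_big; apply: eq_bigr => w _; rewrite mulr_suml.
    by apply: eq_bigr => v _; rewrite mulrA.
  under eq_bigr do rewrite st1.
  rewrite (decomp p (fun k => (k == j)%:R)).
  under eq_bigr do rewrite mulrC.
  by rewrite sum_delta.
- have h := decomp p (fun _ => 1); simpl in h.
  under eq_bigr do rewrite -[pP p _]mulr1.
  by rewrite -h; under eq_bigr do rewrite mulr1.
Qed.

Lemma pmax_eq p : stationary S R mu FN p ->
  p ord_max = \sum_k pP p k * Qmat S R mu FN (emb k) ord_max.
Proof.
move=> [st _]; rewrite -st -(decomp p (fun k => Qmat S R mu FN (emb k) ord_max)).
apply: eq_bigr => v _; congr (_ * _); rewrite /Qmat; apply: eq_bigl => s.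
by rewrite /= tN_emb_proj.
Qed.

Lemma FN_uniq p1 p2 : is_reg S R mu F ->
  stationary S R mu FN p1 -> stationary S R mu FN p2 -> p1 = p2.
Proof.
move=> reg st1 st2.
have e := reg_uniq reg (pP_stat st1) (pP_stat st2).
have m : p1 ord_max = p2 ord_max by rewrite (pmax_eq st1) (pmax_eq st2) e.
apply: funext => v; case: (eqVneq v ord_max) => [->//|vm].
rewrite (not_max_emb vm).
by have := congr1 (fun g => g (proj v)) e; rewrite /pP m => /addIr.
Qed.

End Stat.

Lemma size_gsh a w : (size (gsh a w) <= size w)%N.
Proof. by case: w => [|x [|y w]] //=; case: ifP => //= _; rewrite ltnW. Qed.

Unset Implicit Arguments. Set Strict Implicit.

Theorem lemma24 (R : realType) (S : finType) (mu : S -> R)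
  (hS : (2 <= #|S|)%N)
  (hmu : forall s, 0 < mu s <= 1)
  (hsum : \sum_s mu s = 1)
  (F : codetuple S) :
  in_Fopt S R mu F -> in_F2 S R mu F ->
  exists i : 'I_(ct_m F).+1, RF S F i /\ #|P0 S F 2 i| = 4%N.
Proof.
move=> [[hreg [hext h2dec]] hopt] [_ [_ hF2]].
have hmu' : forall s, 0 < mu s by move=> s; case/andP: (hmu s).
apply: contrapT => Hno.
have H4 : forall i, RF S F i -> #|P0 S F 2 i| != 4%N.
  by move=> i hi; apply/eqP => e; apply: Hno; exists i.
case: (hreg) => pi [stpi _].
have pi0 := reg_nonneg hmu' hsum hreg stpi.
have [j pj] : exists j, 0 < pi j.
  case: (pselect (exists j, 0 < pi j)) => // H; exfalso.
  have : \sum_j pi j <= 0.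
    by apply: sumr_le0 => j _; rewrite leNgt; apply/negP => h; apply: H; exists j.
  rewrite stpi.2; lra.
have [s0 leaf0] := leaf_exists hS h2dec hF2 j.
set i0 := ct_tau F j s0.
have Qj : mu s0 <= Qmat S R mu F j i0.
  rewrite /Qmat (bigD1 s0) //=; rewrite lerDl; apply: sumr_ge0 => s _; exact: ltW.
have pi0pos : 0 < pi i0.
  rewrite -(stpi.1 i0) (bigD1 j) //=.
  have h1 : 0 < pi j * Qmat S R mu F j i0 by apply: mulr_gt0 => //; apply: lt_le_trans Qj.
  have h2 : 0 <= \sum_(k | k != j) pi k * Qmat S R mu F k i0.
    by apply: sumr_ge0 => k _; apply: mulr_ge0 => //; apply: Qmat_ge0.
  lra.
have RF0 : RF S F i0 by apply: (reg_RF hmu' hsum hreg stpi); rewrite gt_eqF.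
have h3 : #|P0 S F 2 i0| = 3%N.
  have le4 : (#|P0 S F 2 i0| <= 4)%N by rewrite -card2t; apply: max_card.
  have := H4 _ RF0; have := hF2 i0; lia.
have [c0 c0n] : exists c0, c0 \notin P0 S F 2 i0.
  case: (pselect (exists c0, c0 \notin P0 S F 2 i0)) => // H; exfalso.
  have e : P0 S F 2 i0 = setT.
    by apply/setP => c; rewrite in_setT; apply/negPn/negP => hc; apply: H; exists c.
  by move: h3; rewrite e cardsT card2t.
have [a [b eab]] := tuple2P c0.
have hab : forall c : 2.-tuple bool, val c = [:: a; b] -> c \notin P0 S F 2 i0.
  by move=> c hc; have -> : c = c0 by apply: val_inj; rewrite hc eab.
have hgood : forall s, good a b (ct_f F i0 s).
  move=> s; rewrite /good; split.
  - exact: (@F1 S F hS h2dec hF2 i0 h3 s).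
  - exact: (@F2 S F hS hF2 i0 a b h3 hab s).
  - by move=> x w; apply: (@F3 S F i0 a b hab s).

have [pN [stN [pN0 _]]] := @existsA R S mu hmu' hsum (FN i0 a) [set: _] ord_max
   (in_setT _) (fun _ _ _ => in_setT _).
have regN : is_reg S R mu (FN i0 a).
  by exists pN; split => // p hp; exact: FN_uniq hreg stN hp.
have F0N : in_F0 S R mu (FN i0 a).
  by split => //; split; [exact: FN_ext | exact: (@FN_2dec S F i0 a b hS h2dec hF2 hgood)].
have hle := hopt _ F0N pi pN stpi stN.
have epi : pi = pP i0 pN by exact: reg_uniq hreg stpi (pP_stat stN).
pose len (k : 'I_(ct_m F).+1) := \sum_s (size (ct_f F k s))%:R * mu s.
pose lenN := \sum_s (size (gsh a (ct_f F i0 s)))%:R * mu s.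
have ediff : Lw S R mu F pi - Lw S R mu (FN i0 a) pN = pN ord_max * (len i0 - lenN).
  rewrite /Lw epi -(decomp i0 pN len) -sumrB big_ord_recr /= big1 ?add0r.
    by rewrite proj_max /fN eqxx mulrBr.
  move=> k _; rewrite -mulrBr; apply/eqP; rewrite mulf_eq0 subr_eq0; apply/orP; right; apply/eqP.
  apply: eq_bigr => s _; rewrite /= -/(emb k) fN_nomax ?emb_max // proj_emb.
have dpos : 0 < len i0 - lenN.
  have [s1 [x1 [w1 e1]]] := @F4 S F hS h2dec hF2 i0 a b h3 hab.
  rewrite /len /lenN -sumrB (bigD1 s1) //=.
  have h1 : 0 < (size (ct_f F i0 s1))%:R * mu s1 - (size (gsh a (ct_f F i0 s1)))%:R * mu s1.
    by rewrite e1 /= eqxx /= -mulrBl -natrB // subSnn mul1r.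
  have h2 : 0 <= \sum_(s | s != s1) ((size (ct_f F i0 s))%:R * mu s - (size (gsh a (ct_f F i0 s)))%:R * mu s).
    apply: sumr_ge0 => s _; rewrite -mulrBl; apply: mulr_ge0; last exact: ltW.
    by rewrite subr_ge0 ler_nat size_gsh.
  lra.
have mpos : 0 < pN ord_max.
  rewrite (pmax_eq stN) -epi (bigD1 j) //=.
  have qj : mu s0 <= Qmat S R mu (FN i0 a) (emb j) ord_max.
    rewrite /Qmat (bigD1 s0) /=; last by rewrite /tN proj_emb eqxx leaf0.
    rewrite lerDl; apply: sumr_ge0 => s _; exact: ltW.
  have h1 : 0 < pi j * Qmat S R mu (FN i0 a) (emb j) ord_max.
    by apply: mulr_gt0 => //; apply: lt_le_trans qj.
  have h2 : 0 <= \sum_(k | k != j) pi k * Qmat S R mu (FN i0 a) (emb k) ord_max.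
    by apply: sumr_ge0 => k _; apply: mulr_ge0 => //; apply: Qmat_ge0.
  lra.
have := mulr_gt0 mpos dpos; rewrite -ediff; lra.
Qed.
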